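(* If a language $L \subseteq \mathbb{N}$ is computably succinct, then any functional property $\psi$ that $L$ captures is in $\Pi^0_2$.
   Context: Programs (generators) are identified with natural numbers in a fixed universal programming language; $\varphi_g$ is the partial computable function computed by $g$, and $|g|$ denotes the length of program $g$ (e.g. number of bits of its representation). $L$ being computably succinct means that there is a computable function $f$ such that for every program $g \in \mathbb{N}$ for which some functionally equivalent program exists in $L$, there is $g' \in L$ with $\varphi_{g'} = \varphi_g$ and $|g'| \le f(|g|)$ (in the argument this is used in the form $g' \le f(g)$, a bound on the index). A property $\psi \subseteq \mathbb{N}$ is functional if whenever $\varphi_g = \varphi_{g'}$, $\psi(g) \leftrightarrow \psi(g')$. $L$ captures $\psi$ if $L$ is decidable, every $g \in L$ satisfies $\psi$, and for every $g' \in \mathbb{N}$ satisfying $\psi$ there is $g \in L$ with $\varphi_g = \varphi_{g'}$. *)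

(* Defs.v *)
(* A concrete fixed universal programming language:
   (untyped-arity) general recursive (mu-recursive) function codes, numbered
   by natural numbers via Cantor pairing. *)
From Stdlib Require Import Arith List Cantor.
Import ListNotations.

Inductive code : Type :=
| CZero : code
| CSucc : code
| CProj : nat -> code
| CComp : code -> list code -> code
| CPrec : code -> code -> code       (* primitive recursion on first arg *)
| CMu   : code -> code.              (* unbounded minimisation on first arg *)

Inductive eval : code -> list nat -> nat -> Prop :=
| ev_zero v : eval CZero v 0
| ev_succ x v : eval CSucc (x :: v) (S x)
| ev_proj i v : i < length v -> eval (CProj i) v (nth i v 0)
| ev_comp f gs v ws y :
    eval_list gs v ws -> eval f ws y -> eval (CComp f gs) v y
| ev_prec0 f g v y : eval f v y -> eval (CPrec f g) (0 :: v) y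
| ev_precS f g n v z y :
    eval (CPrec f g) (n :: v) z -> eval g (n :: z :: v) y ->
    eval (CPrec f g) (S n :: v) y
| ev_mu f v n :
    eval f (n :: v) 0 ->
    (forall m, m < n -> exists k, eval f (m :: v) (S k)) ->
    eval (CMu f) v n
with eval_list : list code -> list nat -> list nat -> Prop :=
| evl_nil v : eval_list [] v []
| evl_cons g gs v w ws :
    eval g v w -> eval_list gs v ws -> eval_list (g :: gs) v (w :: ws).

Fixpoint dec_fuel (fuel n : nat) {struct fuel} : code :=
  match fuel with
  | 0 => CZero
  | S fuel' =>
      let q := n / 6 in
      match n mod 6 with
      | 0 => CZero
      | 1 => CSucc
      | 2 => CProj q
      | 3 => let (a, b) := Cantor.of_nat q in
             CComp (dec_fuel fuel' a) (dec_list_fuel fuel' b)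
      | 4 => let (a, b) := Cantor.of_nat q in
             CPrec (dec_fuel fuel' a) (dec_fuel fuel' b)
      | _ => CMu (dec_fuel fuel' q)
      end
  end
with dec_list_fuel (fuel n : nat) {struct fuel} : list code :=
  match fuel with
  | 0 => []
  | S fuel' =>
      match n with
      | 0 => []
      | S m => let (a, b) := Cantor.of_nat m in
               dec_fuel fuel' a :: dec_list_fuel fuel' b
      end
  end.

Definition decode (g : nat) : code := dec_fuel (S g) g.

Definition phi (g x y : nat) : Prop := eval (decode g) [x] y.

Definition equiv_prog (g g' : nat) : Prop :=
  forall x y, phi g x y <-> phi g' x y.

(* |g| : length of the binary representation of g. *)
Definition prog_len (g : nat) : nat := S (Nat.log2 g).

Definition computable (f : nat -> nat) : Prop :=
  exists e : nat, forall n, eval (decode e) [n] (f n).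

Definition decidable_set (L : nat -> Prop) : Prop :=
  exists e : nat, forall n,
    (L n -> eval (decode e) [n] 1) /\ (~ L n -> eval (decode e) [n] 0).

Definition decidable_rel3 (R : nat -> nat -> nat -> Prop) : Prop :=
  exists e : nat, forall n x y,
    (R n x y -> eval (decode e) [n; x; y] 1) /\
    (~ R n x y -> eval (decode e) [n; x; y] 0).

Definition Pi02 (psi : nat -> Prop) : Prop :=
  exists R, decidable_rel3 R /\ forall n, psi n <-> forall x, exists y, R n x y.

Definition computably_succinct (L : nat -> Prop) : Prop :=
  exists f : nat -> nat, computable f /\
    forall g : nat,
      (exists g0, L g0 /\ equiv_prog g0 g) ->
      exists g', L g' /\ equiv_prog g' g /\ prog_len g' <= f (prog_len g).

Definition functional (psi : nat -> Prop) : Prop :=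
  forall g g', equiv_prog g g' -> (psi g <-> psi g').

Definition captures (L psi : nat -> Prop) : Prop :=
  decidable_set L /\
  (forall g, L g -> psi g) /\
  (forall g', psi g' -> exists g, L g /\ equiv_prog g g').

(* Main.v *)
Require Import Defs.
From Stdlib Require Import Arith List Lia Cantor Bool Setoid Morphisms Classical.
Import ListNotations.

Fixpoint cst (c : nat) : code :=
  match c with 0 => CZero | S c => CComp CSucc [cst c] end.

Lemma eval_cst c v : eval (cst c) v c.
Proof.
  induction c; simpl. constructor.
  econstructor. econstructor. exact IHc. constructor. constructor.
Qed.

Lemma prec_lemma base step env (F : nat -> nat) :
  eval base env (F 0) ->
  (forall n, eval step (n :: F n :: env) (F (S n))) ->
  forall t, eval (CPrec base step) (t :: env) (F t).
Proof.
  intros Hb Hs t; induction t.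
  - now constructor.
  - econstructor; eauto.
Qed.

Lemma evproj i v y : i < length v -> nth i v 0 = y -> eval (CProj i) v y.
Proof. intros H <-; now constructor. Qed.

Ltac prj := apply evproj; [simpl; lia | simpl; reflexivity].
Ltac evl := repeat (first [ apply evl_nil | eapply evl_cons ]).

Definition ADD := CPrec (CProj 0) (CComp CSucc [CProj 1]).
Lemma eval_ADD x y : eval ADD [x; y] (x + y).
Proof.
  apply (prec_lemma _ _ [y] (fun x => x + y)).
  - prj.
  - intros n. econstructor. evl. prj. simpl. constructor.
Qed.

Definition MUL := CPrec CZero (CComp ADD [CProj 1; CProj 2]).
Lemma eval_MUL x y : eval MUL [x; y] (x * y).
Proof.
  apply (prec_lemma _ _ [y] (fun x => x * y)).
  - constructor.
  - intros n. econstructor. evl; try prj.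
    replace (S n * y) with (n * y + y) by lia. apply eval_ADD.
Qed.

Definition PRED := CPrec CZero (CProj 0).
Lemma eval_PRED x : eval PRED [x] (pred x).
Proof.
  apply (prec_lemma _ _ [] pred).
  - constructor.
  - intros n. prj.
Qed.

Definition SUB := CPrec (CProj 0) (CComp PRED [CProj 1]).
Lemma eval_SUB x y : eval SUB [y; x] (x - y).
Proof.
  apply (prec_lemma _ _ [x] (fun y => x - y)).
  - apply evproj; simpl; lia.
  - intros n. econstructor. evl. prj.
    replace (x - S n) with (pred (x - n)) by lia. apply eval_PRED.
Qed.

Definition SG := CPrec CZero (cst 1).
Lemma eval_SG x : eval SG [x] (if x then 0 else 1).
Proof.
  apply (prec_lemma _ _ [] (fun x => if x then 0 else 1)).
  - constructor.
  - intros n. apply eval_cst.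
Qed.

Definition POW := CPrec (cst 1) (CComp MUL [CProj 1; CProj 2]).
Lemma eval_POW a b : eval POW [b; a] (a ^ b).
Proof.
  apply (prec_lemma _ _ [a] (fun b => a ^ b)).
  - apply eval_cst.
  - intros n. econstructor. evl; try prj.
    replace (a ^ S n) with (a ^ n * a) by (simpl; lia). apply eval_MUL.
Qed.

Fixpoint tri (k : nat) : nat := match k with 0 => 0 | S i => S i + tri i end.
Definition TRI := CPrec CZero (CComp ADD [CComp CSucc [CProj 0]; CProj 1]).
Lemma eval_TRI k : eval TRI [k] (tri k).
Proof.
  apply (prec_lemma _ _ [] tri).
  - constructor.
  - intros n. econstructor. evl.
    econstructor. evl. prj. constructor.
    prj. apply eval_ADD.
Qed.

Lemma to_nat_tri x y : to_nat (x, y) = y + tri (y + x).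
Proof. unfold to_nat. f_equal. Qed.

Definition PAR := CPrec CZero (CComp SUB [CProj 1; cst 1]).
Lemma eval_PAR n : eval PAR [n] (if Nat.odd n then 1 else 0).
Proof.
  apply (prec_lemma _ _ [] (fun n => if Nat.odd n then 1 else 0)).
  - constructor.
  - intros m. econstructor. evl. prj. apply eval_cst.
    rewrite Nat.odd_succ, <- Nat.negb_odd.
    match goal with |- eval SUB [?s; 1] ?r => replace r with (1 - s) end. apply eval_SUB.
    destruct (Nat.odd m); reflexivity.
Qed.

Lemma div2_S n : Nat.div2 (S n) = Nat.div2 n + (if Nat.odd n then 1 else 0).
Proof.
  pose proof (Nat.div2_odd n) as A. pose proof (Nat.div2_odd (S n)) as B.
  rewrite Nat.odd_succ, <- Nat.negb_odd in B.
  destruct (Nat.odd n); simpl in *; lia.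
Qed.

Definition HALF := CPrec CZero (CComp ADD [CProj 1; CComp PAR [CProj 0]]).
Lemma eval_HALF n : eval HALF [n] (Nat.div2 n).
Proof.
  apply (prec_lemma _ _ [] Nat.div2).
  - constructor.
  - intros m. econstructor. evl. prj. econstructor. evl. prj. apply eval_PAR.
    rewrite div2_S. apply eval_ADD.
Qed.

Definition ITH := CPrec (CProj 0) (CComp HALF [CProj 1]).
Lemma eval_ITH j s : eval ITH [j; s] (Nat.iter j Nat.div2 s).
Proof.
  apply (prec_lemma _ _ [s] (fun j => Nat.iter j Nat.div2 s)).
  - prj.
  - intros m. econstructor. evl. prj. rewrite Nat.iter_succ. apply eval_HALF.
Qed.

Lemma testbit_iter a n : Nat.testbit a n = Nat.odd (Nat.iter n Nat.div2 a).
Proof.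
  revert a; induction n; intros a; simpl; auto. rewrite IHn.
  rewrite <- Nat.iter_succ_r. reflexivity.
Qed.

Inductive tm : Type :=
| TV : nat -> tm
| TC : nat -> tm
| TAdd : tm -> tm -> tm
| TMul : tm -> tm -> tm
| TSub : tm -> tm -> tm
| TPow : tm -> tm -> tm
| TPair : tm -> tm -> tm
| TS : tm -> tm.

Inductive fm : Type :=
| FEq : tm -> tm -> fm
| FLt : tm -> tm -> fm
| FNot : fm -> fm
| FAnd : fm -> fm -> fm
| FOr : fm -> fm -> fm
| FMem : tm -> tm -> fm
| FLet : nat -> tm -> fm -> fm
| FAll : nat -> tm -> fm -> fm
| FEx : nat -> tm -> fm -> fm.

Definition upd (r : nat -> nat) (x n : nat) : nat -> nat :=
  fun i => if Nat.eqb i x then n else r i.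

Fixpoint evalt (r : nat -> nat) (t : tm) : nat :=
  match t with
  | TV i => r i
  | TC c => c
  | TAdd a b => evalt r a + evalt r b
  | TMul a b => evalt r a * evalt r b
  | TSub a b => evalt r a - evalt r b
  | TPow a b => evalt r a ^ evalt r b
  | TPair a b => to_nat (evalt r a, evalt r b)
  | TS a => S (evalt r a)
  end.

Fixpoint satb (r : nat -> nat) (f : fm) : bool :=
  match f with
  | FEq a b => Nat.eqb (evalt r a) (evalt r b)
  | FLt a b => Nat.ltb (evalt r a) (evalt r b)
  | FNot f => negb (satb r f)
  | FAnd f g => satb r f && satb r g
  | FOr f g => satb r f || satb r g
  | FMem s j => Nat.testbit (evalt r s) (evalt r j)
  | FLet x t f => satb (upd r x (evalt r t)) f
  | FAll x t f => forallb (fun n => satb (upd r x n) f) (seq 0 (evalt r t))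
  | FEx x t f => existsb (fun n => satb (upd r x n) f) (seq 0 (evalt r t))
  end.

Fixpoint satP (r : nat -> nat) (f : fm) : Prop :=
  match f with
  | FEq a b => evalt r a = evalt r b
  | FLt a b => evalt r a < evalt r b
  | FNot f => ~ satP r f
  | FAnd f g => satP r f /\ satP r g
  | FOr f g => satP r f \/ satP r g
  | FMem s j => Nat.testbit (evalt r s) (evalt r j) = true
  | FLet x t f => satP (upd r x (evalt r t)) f
  | FAll x t f => forall n, n < evalt r t -> satP (upd r x n) f
  | FEx x t f => exists n, n < evalt r t /\ satP (upd r x n) f
  end.

Lemma satb_P r f : satb r f = true <-> satP r f.
Proof.
  revert r; induction f; intros r; simpl.
  - apply Nat.eqb_eq.
  - apply Nat.ltb_lt.
  - rewrite negb_true_iff, <- IHf. destruct (satb r f); intuition congruence.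
  - rewrite andb_true_iff, IHf1, IHf2; tauto.
  - rewrite orb_true_iff, IHf1, IHf2; tauto.
  - tauto.
  - apply IHf.
  - rewrite forallb_forall. split.
    + intros H m Hm. apply IHf, H, in_seq. lia.
    + intros H m Hm. apply in_seq in Hm. apply IHf, H. lia.
  - rewrite existsb_exists. split.
    + intros [m [Hm H]]. apply in_seq in Hm. exists m. split; [lia|]. now apply IHf.
    + intros [m [Hm H]]. exists m. split. apply in_seq; lia. now apply IHf.
Qed.

Lemma evalt_ext r1 r2 t : (forall i, r1 i = r2 i) -> evalt r1 t = evalt r2 t.
Proof. intros H; induction t; simpl; congruence. Qed.

Lemma forallb_ext' {A} (f g : A -> bool) l : (forall a, f a = g a) -> forallb f l = forallb g l.
Proof. intros H; induction l; simpl; congruence. Qed.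
Lemma existsb_ext' {A} (f g : A -> bool) l : (forall a, f a = g a) -> existsb f l = existsb g l.
Proof. intros H; induction l; simpl; congruence. Qed.

Lemma satb_ext f : forall r1 r2, (forall i, r1 i = r2 i) -> satb r1 f = satb r2 f.
Proof.
  induction f; intros r1 r2 H; simpl;
    try (rewrite (evalt_ext r1 r2 t H)); try (rewrite (evalt_ext r1 r2 t0 H)).
  - auto.
  - auto.
  - erewrite IHf; eauto.
  - erewrite IHf1, IHf2; eauto.
  - erewrite IHf1, IHf2; eauto.
  - auto.
  - apply IHf. intros i; unfold upd; destruct (i =? n); auto.
  - apply forallb_ext'; intros m; apply IHf; intros i; unfold upd; destruct (i =? n); auto.
  - apply existsb_ext'; intros m; apply IHf; intros i; unfold upd; destruct (i =? n); auto.
Qed.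

Definition b2n (b : bool) : nat := if b then 1 else 0.

Fixpoint ct (K : nat) (t : tm) : code :=
  match t with
  | TV i => if Nat.ltb i K then CProj i else CZero
  | TC c => cst c
  | TAdd a b => CComp ADD [ct K a; ct K b]
  | TMul a b => CComp MUL [ct K a; ct K b]
  | TSub a b => CComp SUB [ct K b; ct K a]
  | TPow a b => CComp POW [ct K b; ct K a]
  | TPair a b => CComp ADD [ct K b; CComp TRI [CComp ADD [ct K b; ct K a]]]
  | TS a => CComp CSucc [ct K a]
  end.

Definition rho (env : list nat) : nat -> nat := fun i => nth i env 0.

Lemma eval_ct K env t : length env = K -> eval (ct K t) env (evalt (rho env) t).
Proof.
  intros HK; induction t; simpl.
  - destruct (Nat.ltb_spec n K).
    + apply evproj; auto; lia.
    + unfold rho; rewrite nth_overflow by lia; constructor.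
  - apply eval_cst.
  - econstructor. evl; eauto. apply eval_ADD.
  - econstructor. evl; eauto. apply eval_MUL.
  - econstructor. evl; eauto. apply eval_SUB.
  - econstructor. evl; eauto. apply eval_POW.
  - econstructor. evl; eauto.
    econstructor. evl. econstructor. evl; eauto. apply eval_ADD. apply eval_TRI.
    replace (to_nat (evalt (rho env) t1, evalt (rho env) t2)) with (evalt (rho env) t2 + tri (evalt (rho env) t2 + evalt (rho env) t1)) by (symmetry; apply to_nat_tri). apply eval_ADD.
  - econstructor. evl; eauto. constructor.
Qed.

Definition EQc (a b : code) : code :=
  CComp SUB [CComp SG [CComp ADD [CComp SUB [b; a]; CComp SUB [a; b]]]; cst 1].

Definition projs (K : nat) : list code := map CProj (seq 0 K).
Definition updprojs (K x : nat) : list code :=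
  map (fun i => if Nat.eqb i x then CProj 0 else CProj (S (S i))) (seq 0 K).

Definition letprojs (K x : nat) (c : code) : list code :=
  map (fun i => if Nat.eqb i x then c else CProj i) (seq 0 K).

Fixpoint cf (K : nat) (f : fm) : code :=
  match f with
  | FEq a b => EQc (ct K a) (ct K b)
  | FLt a b => CComp SG [CComp SUB [ct K a; ct K b]]
  | FNot f => CComp SUB [cf K f; cst 1]
  | FAnd f g => CComp MUL [cf K f; cf K g]
  | FOr f g => CComp SG [CComp ADD [cf K f; cf K g]]
  | FMem s j => CComp PAR [CComp ITH [ct K j; ct K s]]
  | FLet x t f => CComp (cf K f) (letprojs K x (ct K t))
  | FAll x t f =>
      CComp (CPrec (cst 1) (CComp MUL [CProj 1; CComp (cf K f) (updprojs K x)]))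
            (ct K t :: projs K)
  | FEx x t f =>
      CComp (CPrec CZero (CComp SG [CComp ADD [CProj 1; CComp (cf K f) (updprojs K x)]]))
            (ct K t :: projs K)
  end.

Fixpoint wf (K : nat) (f : fm) : bool :=
  match f with
  | FEq _ _ | FLt _ _ | FMem _ _ => true
  | FNot f => wf K f
  | FAnd f g | FOr f g => wf K f && wf K g
  | FAll x _ f | FEx x _ f | FLet x _ f => Nat.ltb x K && wf K f
  end.

Lemma evl_map {A} (h : A -> code) (F : A -> nat) v l :
  (forall a, In a l -> eval (h a) v (F a)) -> eval_list (map h l) v (map F l).
Proof.
  induction l; simpl; intros H. constructor. constructor; auto.
Qed.

Lemma nth_map_seq (f : nat -> nat) s K n d : n < K -> nth n (map f (seq s K)) d = f (s + n).
Proof.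
  revert s n; induction K; intros s n Hn; [lia|]. simpl.
  destruct n. f_equal; lia. rewrite IHK by lia. f_equal; lia.
Qed.

Lemma map_nth_seq env K : length env = K -> map (fun i => nth i env 0) (seq 0 K) = env.
Proof.
  intros <-. apply nth_ext with 0 0. rewrite length_map, length_seq; auto.
  intros n. rewrite length_map, length_seq. intros Hn.
  rewrite nth_map_seq by auto. reflexivity.
Qed.

Lemma eval_projs K env : length env = K -> eval_list (projs K) env env.
Proof.
  intros HK. unfold projs. rewrite <- (map_nth_seq env K HK) at 2.
  apply evl_map. intros a Ha. apply in_seq in Ha. apply evproj; auto; lia.
Qed.

Lemma eval_updprojs K x env n z : length env = K ->
  eval_list (updprojs K x) (n :: z :: env)
    (map (fun i => if Nat.eqb i x then n else nth i env 0) (seq 0 K)).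
Proof.
  intros HK. unfold updprojs. apply evl_map. intros a Ha. apply in_seq in Ha.
  destruct (a =? x). apply evproj; simpl; auto; lia.
  apply evproj; simpl; auto; lia.
Qed.

Lemma eval_letprojs K x env c n : length env = K -> eval c env n ->
  eval_list (letprojs K x c) env
    (map (fun i => if Nat.eqb i x then n else nth i env 0) (seq 0 K)).
Proof.
  intros HK Hc. unfold letprojs. apply evl_map. intros a Ha. apply in_seq in Ha.
  destruct (a =? x). auto. apply evproj; simpl; auto; lia.
Qed.

Lemma upd_env_rho K x env n : length env = K -> x < K ->
  forall i, rho (map (fun i => if Nat.eqb i x then n else nth i env 0) (seq 0 K)) i
            = upd (rho env) x n i.
Proof.
  intros HK Hx i. unfold rho, upd.
  destruct (Nat.ltb_spec i K).
  - rewrite nth_map_seq by auto. reflexivity.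
  - rewrite nth_overflow by (rewrite length_map, length_seq; lia).
    destruct (Nat.eqb_spec i x). lia. rewrite nth_overflow; auto; lia.
Qed.

Lemma eval_cf K f : forall env, length env = K -> wf K f = true ->
  eval (cf K f) env (b2n (satb (rho env) f)).
Proof.
  induction f; intros env HK Hwf; simpl in *.
  - unfold EQc. econstructor. evl. econstructor. evl. econstructor. evl.
    econstructor. evl; apply eval_ct; auto. apply eval_SUB.
    econstructor. evl; apply eval_ct; auto. apply eval_SUB.
    apply eval_ADD. apply eval_SG. apply (eval_cst 1).
    match goal with |- eval SUB [?s; 1] ?r => replace r with (1 - s) end. apply eval_SUB.
    destruct (Nat.eqb_spec (evalt (rho env) t) (evalt (rho env) t0));
      match goal with |- context [if ?x then 0 else 1] => destruct x eqn:E end;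
      simpl; lia.
  - econstructor. evl. econstructor. evl; apply eval_ct; auto. apply eval_SUB.
    match goal with |- eval SG [?a] ?r => replace r with (if a then 0 else 1) end. apply eval_SG.
    destruct (Nat.ltb_spec (evalt (rho env) t) (evalt (rho env) t0));
      destruct (evalt (rho env) t0 - evalt (rho env) t) eqn:E; simpl; lia.
  - econstructor. evl. apply IHf; auto. apply (eval_cst 1).
    match goal with |- eval SUB [?s; 1] ?r => replace r with (1 - s) end. apply eval_SUB.
    destruct (satb (rho env) f); reflexivity.
  - apply andb_true_iff in Hwf as [H1 H2].
    econstructor. evl. apply IHf1; auto. apply IHf2; auto.
    match goal with |- eval MUL [?a; ?b] ?r => replace r with (a * b) end. apply eval_MUL.
    destruct (satb (rho env) f1), (satb (rho env) f2); reflexivity.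
  - apply andb_true_iff in Hwf as [H1 H2].
    econstructor. evl. econstructor. evl. apply IHf1; auto. apply IHf2; auto.
    apply eval_ADD.
    match goal with |- eval SG [?a] ?r => replace r with (if a then 0 else 1) end. apply eval_SG.
    destruct (satb (rho env) f1), (satb (rho env) f2); reflexivity.
  - econstructor. evl. econstructor. evl; apply eval_ct; auto. apply eval_ITH.
    rewrite testbit_iter. match goal with |- eval PAR [?a] ?r => replace r with (if Nat.odd a then 1 else 0) end.
    apply eval_PAR. destruct (Nat.odd _); reflexivity.
  - apply andb_true_iff in Hwf as [H1 H2]. apply Nat.ltb_lt in H1.
    econstructor. apply eval_letprojs; auto. apply eval_ct; auto.
    rewrite <- (satb_ext f _ _ (upd_env_rho K n env _ HK H1)). apply IHf; auto.
    rewrite length_map, length_seq; auto.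
  - apply andb_true_iff in Hwf as [H1 H2]. apply Nat.ltb_lt in H1.
    econstructor. constructor. apply eval_ct; auto. apply eval_projs; auto.
    apply (prec_lemma _ _ env (fun m => b2n (forallb (fun k => satb (upd (rho env) n k) f) (seq 0 m)))).
    + apply (eval_cst 1).
    + intros m. econstructor. evl. apply evproj; simpl; auto; lia.
      econstructor. apply eval_updprojs; auto. apply IHf.
      rewrite length_map, length_seq; auto. auto.
      rewrite (satb_ext f _ _ (upd_env_rho K n env m HK H1)).
      match goal with |- eval MUL [?a; ?b] ?r => replace r with (a * b) end. apply eval_MUL.
      rewrite seq_S, forallb_app. simpl.
      destruct (forallb _ (seq 0 m)), (satb (upd (rho env) n m) f); reflexivity.
  - apply andb_true_iff in Hwf as [H1 H2]. apply Nat.ltb_lt in H1.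
    econstructor. constructor. apply eval_ct; auto. apply eval_projs; auto.
    apply (prec_lemma _ _ env (fun m => b2n (existsb (fun k => satb (upd (rho env) n k) f) (seq 0 m)))).
    + constructor.
    + intros m. econstructor. evl. econstructor. evl. apply evproj; simpl; auto; lia.
      econstructor. apply eval_updprojs; auto. apply IHf.
      rewrite length_map, length_seq; auto. auto.
      rewrite (satb_ext f _ _ (upd_env_rho K n env m HK H1)). apply eval_ADD.
      match goal with |- eval SG [?a] ?r => replace r with (if a then 0 else 1) end. apply eval_SG.
      rewrite seq_S, existsb_app. simpl.
      destruct (existsb _ (seq 0 m)), (satb (upd (rho env) n m) f); reflexivity.
Qed.

Arguments to_nat : simpl never.
Arguments of_nat : simpl never.

Fixpoint enc_l (l : list nat) : nat :=
  match l with [] => 0 | x :: l => S (to_nat (x, enc_l l)) end.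

Lemma to_nat_ge x y : x <= to_nat (x, y) /\ y <= to_nat (x, y).
Proof. pose proof (to_nat_non_decreasing x y). lia. Qed.

Lemma enc_l_inj l1 l2 : enc_l l1 = enc_l l2 -> l1 = l2.
Proof.
  revert l2; induction l1; intros [|b l2]; simpl; try discriminate; auto.
  intros H. injection H as H. apply to_nat_inj in H. injection H as -> H.
  f_equal; auto.
Qed.

Lemma enc_l_surj n : exists l, enc_l l = n.
Proof.
  induction n as [n IH] using (well_founded_induction lt_wf).
  destruct n. exists []; auto.
  destruct (of_nat n) as [a b] eqn:E.
  assert (Hn : to_nat (a, b) = n) by (rewrite <- E; apply cancel_to_of).
  destruct (IH b) as [l Hl]. pose proof (to_nat_ge a b). lia.
  exists (a :: l). simpl. rewrite Hl, Hn. auto.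
Qed.

Lemma of_nat_le q a b : of_nat q = (a, b) -> a <= q /\ b <= q.
Proof.
  intros E. pose proof (cancel_to_of q) as H. rewrite E in H. rewrite <- H. apply to_nat_ge.
Qed.

Lemma dec_fuel_S fuel n : dec_fuel (S fuel) n =
  match n mod 6 with
  | 0 => CZero
  | 1 => CSucc
  | 2 => CProj (n / 6)
  | 3 => let (a, b) := of_nat (n / 6) in CComp (dec_fuel fuel a) (dec_list_fuel fuel b)
  | 4 => let (a, b) := of_nat (n / 6) in CPrec (dec_fuel fuel a) (dec_fuel fuel b)
  | _ => CMu (dec_fuel fuel (n / 6))
  end.
Proof. reflexivity. Qed.

Lemma dec_list_fuel_S fuel n : dec_list_fuel (S fuel) n =
  match n with
  | 0 => []
  | S m => let (a, b) := of_nat m in dec_fuel fuel a :: dec_list_fuel fuel b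
  end.
Proof. reflexivity. Qed.

Lemma dec_stable fuel : forall n, n < fuel ->
  dec_fuel fuel n = dec_fuel (S fuel) n /\ dec_list_fuel fuel n = dec_list_fuel (S fuel) n.
Proof.
  induction fuel; intros n Hn; [lia|].
  assert (Hq : n <> 0 -> n / 6 < n) by (intros; apply Nat.div_lt; lia).
  split.
  - rewrite !dec_fuel_S.
    destruct (n mod 6) as [|[|[|[|[|[|]]]]]] eqn:Hm; auto.
    + destruct (of_nat (n / 6)) as [a b] eqn:E. apply of_nat_le in E.
      assert (n <> 0) by (intro; subst; discriminate).
      rewrite (proj1 (IHfuel a ltac:(lia))), (proj2 (IHfuel b ltac:(lia))). auto.
    + destruct (of_nat (n / 6)) as [a b] eqn:E. apply of_nat_le in E.
      assert (n <> 0) by (intro; subst; discriminate).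
      rewrite (proj1 (IHfuel a ltac:(lia))), (proj1 (IHfuel b ltac:(lia))). auto.
    + assert (n <> 0) by (intro; subst; discriminate).
      rewrite (proj1 (IHfuel (n / 6) ltac:(lia))). auto.
    + assert (n <> 0) by (intro; subst; discriminate).
      rewrite (proj1 (IHfuel (n / 6) ltac:(lia))). auto.
  - rewrite !dec_list_fuel_S.
    destruct n; auto.
    destruct (of_nat n) as [a b] eqn:E. apply of_nat_le in E.
    rewrite (proj1 (IHfuel a ltac:(lia))), (proj2 (IHfuel b ltac:(lia))). auto.
Qed.

Lemma dec_big fuel n : n < fuel ->
  dec_fuel fuel n = decode n /\ dec_list_fuel fuel n = dec_list_fuel (S n) n.
Proof.
  intros H. induction H.
  - auto.
  - destruct IHle as [A B]. destruct (dec_stable m n) as [C D]; [lia|].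
    rewrite <- C, <- D. auto.
Qed.

Lemma dec_list_enc l : dec_list_fuel (S (enc_l l)) (enc_l l) = map decode l.
Proof.
  induction l; auto. simpl enc_l. rewrite dec_list_fuel_S.
  rewrite cancel_of_to. pose proof (to_nat_ge a (enc_l l)).
  rewrite (proj1 (dec_big (S (to_nat (a, enc_l l))) a ltac:(lia))).
  rewrite (proj2 (dec_big (S (to_nat (a, enc_l l))) (enc_l l) ltac:(lia))). rewrite IHl. auto.
Qed.

Lemma decode_eq n : decode n =
  match n mod 6 with
  | 0 => CZero
  | 1 => CSucc
  | 2 => CProj (n / 6)
  | 3 => let (a, b) := of_nat (n / 6) in CComp (decode a) (dec_list_fuel (S b) b)
  | 4 => let (a, b) := of_nat (n / 6) in CPrec (decode a) (decode b)
  | _ => CMu (decode (n / 6))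
  end.
Proof.
  unfold decode at 1. rewrite dec_fuel_S.
  assert (Hq : n <> 0 -> n / 6 < n) by (intros; apply Nat.div_lt; lia).
  destruct (n mod 6) as [|[|[|[|[|[|]]]]]] eqn:Hm; auto.
  - destruct (of_nat (n / 6)) as [a b] eqn:E. apply of_nat_le in E.
    assert (n <> 0) by (intro; subst; discriminate).
    rewrite (proj1 (dec_big n a ltac:(lia))), (proj2 (dec_big n b ltac:(lia))). auto.
  - destruct (of_nat (n / 6)) as [a b] eqn:E. apply of_nat_le in E.
    assert (n <> 0) by (intro; subst; discriminate).
    rewrite (proj1 (dec_big n a ltac:(lia))), (proj1 (dec_big n b ltac:(lia))). auto.
  - assert (n <> 0) by (intro; subst; discriminate).
    rewrite (proj1 (dec_big n (n/6) ltac:(lia))). auto.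
  - assert (n <> 0) by (intro; subst; discriminate).
    rewrite (proj1 (dec_big n (n/6) ltac:(lia))). auto.
Qed.

Lemma divmod6 q k : k < 6 -> (6 * q + k) / 6 = q /\ (6 * q + k) mod 6 = k.
Proof.
  intros Hk. split.
  - rewrite Nat.mul_comm, Nat.div_add_l by lia. rewrite Nat.div_small; lia.
  - rewrite Nat.mul_comm, Nat.add_comm, Nat.Div0.mod_add. apply Nat.mod_small; lia.
Qed.

Lemma dec0 q : decode (6 * q) = CZero.
Proof. rewrite decode_eq. replace (6 * q) with (6 * q + 0) by lia. now rewrite (proj2 (divmod6 q 0 ltac:(lia))). Qed.
Lemma dec1 q : decode (6 * q + 1) = CSucc.
Proof. rewrite decode_eq. now rewrite (proj2 (divmod6 q 1 ltac:(lia))). Qed.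
Lemma dec2 q : decode (6 * q + 2) = CProj q.
Proof. rewrite decode_eq. destruct (divmod6 q 2 ltac:(lia)) as [-> ->]. auto. Qed.
Lemma dec3 a l : decode (6 * to_nat (a, enc_l l) + 3) = CComp (decode a) (map decode l).
Proof.
  rewrite decode_eq. destruct (divmod6 (to_nat (a, enc_l l)) 3 ltac:(lia)) as [-> ->].
  rewrite cancel_of_to. now rewrite dec_list_enc.
Qed.
Lemma dec4 a b : decode (6 * to_nat (a, b) + 4) = CPrec (decode a) (decode b).
Proof.
  rewrite decode_eq. destruct (divmod6 (to_nat (a, b)) 4 ltac:(lia)) as [-> ->].
  now rewrite cancel_of_to.
Qed.
Lemma dec5 q : decode (6 * q + 5) = CMu (decode q).
Proof. rewrite decode_eq. destruct (divmod6 q 5 ltac:(lia)) as [-> ->]. auto. Qed.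

Fixpoint enc_c (c : code) : nat :=
  match c with
  | CZero => 0
  | CSucc => 1
  | CProj i => 6 * i + 2
  | CComp f gs => 6 * to_nat (enc_c f, enc_l (map enc_c gs)) + 3
  | CPrec f g => 6 * to_nat (enc_c f, enc_c g) + 4
  | CMu f => 6 * enc_c f + 5
  end.

Lemma decode_enc_c : forall c, decode (enc_c c) = c.
Proof.
  fix IH 1. intros c; destruct c.
  - apply (dec0 0).
  - apply (dec1 0).
  - apply dec2.
  - change (enc_c (CComp c l)) with (6 * to_nat (enc_c c, enc_l (map enc_c l)) + 3).
    rewrite dec3, IH. f_equal. rewrite map_map.
    clear c. induction l as [|g gs IHl]; auto. cbn [map]. rewrite IH. f_equal. exact IHl.
  - change (enc_c (CPrec c1 c2)) with (6 * to_nat (enc_c c1, enc_c c2) + 4).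
    rewrite dec4, !IH. auto.
  - change (enc_c (CMu c)) with (6 * enc_c c + 5). rewrite dec5, IH. auto.
Qed.

Lemma code_ind' (P : code -> Prop) :
  P CZero -> P CSucc -> (forall i, P (CProj i)) ->
  (forall f gs, P f -> Forall P gs -> P (CComp f gs)) ->
  (forall f g, P f -> P g -> P (CPrec f g)) ->
  (forall f, P f -> P (CMu f)) -> forall c, P c.
Proof.
  intros H0 H1 H2 H3 H4 H5. fix IH 1. intros c; destruct c.
  - exact H0.
  - exact H1.
  - apply H2.
  - apply H3. apply IH. induction l as [|g gs IHl]. constructor. constructor. apply IH. exact IHl.
  - apply H4; apply IH.
  - apply H5; apply IH.
Qed.

Lemma eval_det : forall c v y y', eval c v y -> eval c v y' -> y = y'.
Proof.
  apply (code_ind' (fun c => forall v y y', eval c v y -> eval c v y' -> y = y')).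
  - intros v y y' A B. inversion A; inversion B; subst; auto.
  - intros v y y' A B. inversion A; inversion B; subst. congruence.
  - intros i v y y' A B. inversion A; inversion B; subst; auto.
  - intros f gs Hf Hgs v y y' A B.
    assert (LD : forall ws ws0, eval_list gs v ws -> eval_list gs v ws0 -> ws = ws0).
    { clear - Hgs. induction gs as [|g gs IH]; intros ws ws0 A B.
      - inversion A; inversion B; subst; auto.
      - inversion Hgs; subst. inversion A; inversion B; subst. f_equal; eauto. }
    inversion A; inversion B; subst.
    assert (ws = ws0) by eauto. subst. eauto.
  - intros f g Hf Hg v y y' A B.
    assert (forall n v y y', eval (CPrec f g) (n :: v) y -> eval (CPrec f g) (n :: v) y' -> y = y').
    { induction n; intros v0 z z' C D; inversion C; inversion D; subst; eauto.
      assert (z0 = z1) by eauto. subst. eauto. }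
    inversion A; subst; eauto.
  - intros f Hf v y y' A B. inversion A; inversion B; subst.
    destruct (lt_eq_lt_dec y y') as [[Hl|]|Hl]; auto.
    + destruct (H6 y Hl) as [k Hk]. specialize (Hf _ _ _ H0 Hk). discriminate.
    + destruct (H1 y' Hl) as [k Hk]. specialize (Hf _ _ _ H5 Hk). discriminate.
Qed.

Arguments to_nat : simpl never.
Arguments of_nat : simpl never.

Definition cons_ x l := S (to_nat (x, l)).
Definition jE c V y := to_nat (0, to_nat (c, to_nat (V, y))).
Definition jL c V y := to_nat (1, to_nat (c, to_nat (V, y))).
Definition jN c V y := to_nat (2, to_nat (c, to_nat (V, y))).

Definition JustC (mem : nat -> Prop) (j : nat) : Prop :=
 exists tag a b c, j = to_nat (tag, to_nat (a, to_nat (b, c))) /\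
 ( (tag = 0 /\ (
     (exists q, a = 6*q /\ c = 0)
   \/ (exists q x l, a = 6*q+1 /\ b = cons_ x l /\ c = S x)
   \/ (exists q, a = 6*q+2 /\ mem (jN q b c))
   \/ (exists f gs W, a = 6*to_nat (f,gs)+3 /\ mem (jL gs b W) /\ mem (jE f W c))
   \/ (exists f g V', a = 6*to_nat (f,g)+4 /\ b = cons_ 0 V' /\ mem (jE f V' c))
   \/ (exists f g k V' z, a = 6*to_nat (f,g)+4 /\ b = cons_ (S k) V' /\
          mem (jE a (cons_ k V') z) /\ mem (jE g (cons_ k (cons_ z V')) c))
   \/ (exists q, a = 6*q+5 /\ mem (jE q (cons_ c b) 0) /\
          forall m, m < c -> exists k, mem (jE q (cons_ m b) (S k)))))
  \/ (tag = 1 /\ ((a = 0 /\ c = 0) \/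
        exists g gs w ws, a = cons_ g gs /\ c = cons_ w ws /\ mem (jE g b w) /\ mem (jL gs b ws)))
  \/ (tag = 2 /\ ((exists l, a = 0 /\ b = cons_ c l) \/
        exists i x l, a = S i /\ b = cons_ x l /\ mem (jN i l c)))).

Definition Sem (tag a b c : nat) : Prop :=
  match tag with
  | 0 => forall lv, b = enc_l lv -> eval (decode a) lv c
  | 1 => forall lc lv lw, a = enc_l lc -> b = enc_l lv -> c = enc_l lw ->
           eval_list (map decode lc) lv lw
  | 2 => forall lv, b = enc_l lv -> a < length lv /\ nth a lv 0 = c
  | _ => True
  end.

Lemma enc_cons lv x l : enc_l lv = cons_ x l -> exists lv', lv = x :: lv' /\ enc_l lv' = l.
Proof.
  destruct lv as [|y lv']; simpl; unfold cons_; intros H; [discriminate|].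
  injection H as H. apply to_nat_inj in H. injection H as H1 H2. subst. eauto.
Qed.

Lemma enc_zero lv : enc_l lv = 0 -> lv = [].
Proof. destruct lv; simpl; auto; discriminate. Qed.

Lemma tn3_inj t a b c t' a' b' c' :
  to_nat (t, to_nat (a, to_nat (b, c))) = to_nat (t', to_nat (a', to_nat (b', c'))) ->
  t = t' /\ a = a' /\ b = b' /\ c = c'.
Proof.
  intros H. apply to_nat_inj in H. injection H as -> H.
  apply to_nat_inj in H. injection H as -> H.
  apply to_nat_inj in H. injection H as -> ->. auto.
Qed.

Lemma to_nat_lt_x x x' y : x < x' -> to_nat (x, y) < to_nat (x', y).
Proof.
  intros H. pose proof (to_nat_spec x y). pose proof (to_nat_spec x' y).
  assert ((y + x) * S (y + x) < (y + x') * S (y + x')) by (apply Nat.mul_lt_mono; lia).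
  lia.
Qed.

Lemma soundness (mem : nat -> Prop) :
  (forall j, mem j -> JustC mem j) ->
  forall a b tag c, mem (to_nat (tag, to_nat (a, to_nat (b, c)))) -> Sem tag a b c.
Proof.
  intros Hcl a.
  induction a as [a IHa] using (well_founded_induction lt_wf).
  intros b. induction b as [b IHb] using (well_founded_induction lt_wf).
  intros tag c Hm. apply Hcl in Hm.
  destruct Hm as (tag' & a' & b' & c' & Heq & H).
  apply tn3_inj in Heq as (<- & <- & <- & <-).
  destruct H as [[-> H]|[[-> H]|[-> H]]]; cbn [Sem].
  - intros lv ->.
    destruct H as [(q & -> & ->)|[(q & x & l & -> & Hb & ->)|[(q & -> & Hn)|
      [(f & gs & W & -> & HL & HE)|[(f & g & V' & -> & Hb & HE)|
      [(f & g & k & V' & z & -> & Hb & H1 & H2)|(q & -> & H1 & H2)]]]]]].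
    + rewrite dec0. constructor.
    + rewrite dec1. apply enc_cons in Hb as (lv' & -> & _). constructor.
    + rewrite dec2. assert (Hq : q < 6 * q + 2) by lia.
      destruct (IHa q Hq _ _ _ Hn lv eq_refl) as [A B]. rewrite <- B. now constructor.
    + destruct (enc_l_surj gs) as [lc <-]. rewrite dec3.
      destruct (enc_l_surj W) as [lw <-].
      pose proof (to_nat_ge f (enc_l lc)).
      econstructor.
      * apply (IHa (enc_l lc) ltac:(lia) _ 1 _ HL lc lv lw); auto.
      * apply (IHa f ltac:(lia) _ 0 _ HE); auto.
    + rewrite dec4. apply enc_cons in Hb as (lv' & -> & <-).
      pose proof (to_nat_ge f g).
      constructor. apply (IHa f ltac:(lia) _ 0 _ HE); auto.
    + rewrite dec4. apply enc_cons in Hb as (lv' & -> & <-).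
      pose proof (to_nat_ge f g).
      econstructor.
      * rewrite <- dec4.
        assert (LT : cons_ k (enc_l lv') < enc_l (S k :: lv')).
        { simpl. unfold cons_. pose proof (to_nat_lt_x k (S k) (enc_l lv')). lia. }
        exact (IHb _ LT 0 z H1 (k :: lv') eq_refl).
      * apply (IHa g ltac:(lia) _ 0 _ H2). reflexivity.
    + rewrite dec5. constructor.
      * apply (IHa q ltac:(lia) _ 0 _ H1). reflexivity.
      * intros m Hm. destruct (H2 m Hm) as [k Hk]. exists k.
        apply (IHa q ltac:(lia) _ 0 _ Hk). reflexivity.
  - intros lc lv lw -> -> ->.
    destruct H as [[Ha Hc]|(g & gs & w & ws & Ha & Hc & H1 & H2)].
    + apply enc_zero in Ha, Hc. subst. constructor.
    + apply enc_cons in Ha as (lc' & -> & Hgs).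
      apply enc_cons in Hc as (lw' & -> & Hws).
      subst gs ws.
      assert (B1 : g < enc_l (g :: lc') /\ enc_l lc' < enc_l (g :: lc')).
      { simpl. pose proof (to_nat_ge g (enc_l lc')). lia. }
      simpl. constructor.
      * apply (IHa g (proj1 B1) _ 0 _ H1). reflexivity.
      * apply (IHa _ (proj2 B1) _ 1 _ H2); auto.
  - intros lv ->.
    destruct H as [(l & -> & Hb)|(i & x & l & -> & Hb & H1)].
    + apply enc_cons in Hb as (lv' & -> & _). simpl. split; auto; lia.
    + apply enc_cons in Hb as (lv' & -> & <-).
      destruct (IHa i ltac:(lia) _ 2 _ H1 lv' eq_refl). simpl. split; auto; lia.
Qed.

Arguments to_nat : simpl never.
Arguments of_nat : simpl never.

Lemma JustC_mono (m1 m2 : nat -> Prop) j :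
  (forall x, m1 x -> m2 x) -> JustC m1 j -> JustC m2 j.
Proof.
  intros Hm (tag & a & b & c & E & H). exists tag, a, b, c. split; [exact E|].
  destruct H as [[T H]|[[T H]|[T H]]].
  - left. split; [exact T|].
    destruct H as [H|[H|[H|[H|[H|[H|H]]]]]].
    + left; exact H.
    + right; left; exact H.
    + right; right; left. destruct H as (q & A & B). eauto.
    + right; right; right; left. destruct H as (f & gs & W & A & B & C). eauto 10.
    + right; right; right; right; left. destruct H as (f & g & V & A & B & C). eauto 10.
    + right; right; right; right; right; left.
      destruct H as (f & g & k & V & z & A & B & C & D). exists f, g, k, V, z. eauto 10.
    + right; right; right; right; right; right.
      destruct H as (q & A & B & C). exists q. split; [auto|]. split; [auto|].
      intros m Hm'. destruct (C m Hm') as [k Hk]. eauto.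
  - right; left. split; [exact T|].
    destruct H as [H|(g & gs & w & ws & A & B & C & D)]; [left; exact H|right].
    exists g, gs, w, ws. eauto 10.
  - right; right. split; [exact T|].
    destruct H as [H|(i & x & l & A & B & C)]; [left; exact H|right]. eauto 10.
Qed.

Definition closedL (l : list nat) := forall j, In j l -> JustC (fun x => In x l) j.

Lemma closed_nil : closedL [].
Proof. intros j []. Qed.

Lemma closed_app l1 l2 : closedL l1 -> closedL l2 -> closedL (l1 ++ l2).
Proof.
  intros H1 H2 j Hj. apply in_app_or in Hj as [Hj|Hj].
  - eapply JustC_mono; [|apply H1, Hj]. intros x Hx; apply in_or_app; auto.
  - eapply JustC_mono; [|apply H2, Hj]. intros x Hx; apply in_or_app; auto.
Qed.

Lemma closed_cons l J : closedL l -> JustC (fun x => In x l) J -> closedL (J :: l).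
Proof.
  intros H HJ j [<-|Hj].
  - eapply JustC_mono; [|exact HJ]. intros x Hx; right; auto.
  - eapply JustC_mono; [|apply H, Hj]. intros x Hx; right; auto.
Qed.

Lemma nth_compl lv : forall i, i < length lv ->
  exists l, closedL l /\ In (jN i (enc_l lv) (nth i lv 0)) l.
Proof.
  induction lv as [|x lv IH]; intros i Hi; simpl in Hi; [lia|].
  destruct i as [|i].
  - exists [jN 0 (enc_l (x :: lv)) x]. split; [|left; reflexivity].
    apply closed_cons; [apply closed_nil|].
    exists 2, 0, (enc_l (x :: lv)), x. split; [reflexivity|]. right; right. split; [reflexivity|].
    left. exists (enc_l lv). split; reflexivity.
  - destruct (IH i ltac:(lia)) as (l & Hl & Hin).
    exists (jN (S i) (enc_l (x :: lv)) (nth (S i) (x :: lv) 0) :: l). split; [|left; reflexivity].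
    apply closed_cons; auto.
    exists 2, (S i), (enc_l (x :: lv)), (nth i lv 0). split; [reflexivity|]. right; right. split; [reflexivity|].
    right. exists i, x, (enc_l lv). split; [reflexivity|]. split; [reflexivity|]. exact Hin.
Qed.

Lemma decode_cases cn :
  (decode cn = CZero /\ exists q, cn = 6 * q) \/
  (decode cn = CSucc /\ exists q, cn = 6 * q + 1) \/
  (exists q, cn = 6 * q + 2 /\ decode cn = CProj q) \/
  (exists a lc, cn = 6 * to_nat (a, enc_l lc) + 3 /\ decode cn = CComp (decode a) (map decode lc)) \/
  (exists a b, cn = 6 * to_nat (a, b) + 4 /\ decode cn = CPrec (decode a) (decode b)) \/
  (exists q, cn = 6 * q + 5 /\ decode cn = CMu (decode q)).
Proof.
  pose proof (Nat.div_mod_eq cn 6) as E. pose proof (Nat.mod_upper_bound cn 6 ltac:(lia)) as M.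
  destruct (cn mod 6) as [|[|[|[|[|[|]]]]]] eqn:Hm; try lia.
  - left. split. rewrite E, Nat.add_0_r. apply dec0. exists (cn / 6); lia.
  - right; left. split. rewrite E. apply dec1. exists (cn / 6); lia.
  - right; right; left. exists (cn / 6). split. lia. rewrite E at 1. apply dec2.
  - right; right; right; left. destruct (of_nat (cn / 6)) as [a b] eqn:Eo.
    destruct (enc_l_surj b) as [lc <-]. exists a, lc.
    assert (cn = 6 * to_nat (a, enc_l lc) + 3).
    { rewrite <- Eo, cancel_to_of. lia. }
    split; auto. rewrite H at 1. apply dec3.
  - right; right; right; right; left. destruct (of_nat (cn / 6)) as [a b] eqn:Eo.
    exists a, b.
    assert (cn = 6 * to_nat (a, b) + 4).
    { rewrite <- Eo, cancel_to_of. lia. }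
    split; auto. rewrite H at 1. apply dec4.
  - right; right; right; right; right. exists (cn / 6). split. lia. rewrite E at 1. apply dec5.
Qed.

Lemma collect (P : nat -> list nat -> Prop) n :
  (forall m l l', P m l -> incl l l' -> P m l') ->
  (forall m, m < n -> exists l, closedL l /\ P m l) ->
  exists l, closedL l /\ forall m, m < n -> P m l.
Proof.
  intros Hmono. induction n; intros H.
  - exists []. split. apply closed_nil. intros; lia.
  - destruct IHn as (l1 & C1 & P1). intros m Hm; apply H; lia.
    destruct (H n ltac:(lia)) as (l2 & C2 & P2).
    exists (l1 ++ l2). split. apply closed_app; auto.
    intros m Hm. destruct (Nat.eq_dec m n) as [->|].
    + eapply Hmono; [exact P2|]. intros x Hx; apply in_or_app; auto.
    + eapply Hmono; [apply P1; lia|]. intros x Hx; apply in_or_app; auto.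
Qed.

Ltac inapp := repeat (first [ left; reflexivity | apply in_or_app; left; assumption
                            | apply in_or_app; right; assumption | right ]).

Lemma completeness : forall c lv y, eval c lv y -> forall cn, decode cn = c ->
  exists l, closedL l /\ In (jE cn (enc_l lv) y) l.
Proof.
  apply (code_ind' (fun c => forall lv y, eval c lv y -> forall cn, decode cn = c ->
    exists l, closedL l /\ In (jE cn (enc_l lv) y) l)).
  - intros lv y Hev cn Hd. inversion Hev; subst.
    destruct (decode_cases cn) as [[_ (q & ->)]|[[H _]|[(q & _ & H)|[(a & lc & _ & H)|[(a & b & _ & H)|(q & _ & H)]]]]];
      try (rewrite H in Hd; discriminate).
    exists [jE (6 * q) (enc_l lv) 0]. split; [|left; reflexivity].
    apply closed_cons; [apply closed_nil|].
    exists 0, (6 * q), (enc_l lv), 0. split; [reflexivity|]. left. split; [reflexivity|].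
    left. exists q. auto.
  - intros lv y Hev cn Hd. inversion Hev; subst.
    destruct (decode_cases cn) as [[H _]|[[_ (q & ->)]|[(q & _ & H)|[(a & lc & _ & H)|[(a & b & _ & H)|(q & _ & H)]]]]];
      try (rewrite H in Hd; discriminate).
    eexists [_]. split; [|left; reflexivity].
    apply closed_cons; [apply closed_nil|].
    exists 0, (6 * q + 1), (enc_l (x :: v)), (S x). split; [reflexivity|]. left. split; [reflexivity|].
    right; left. exists q, x, (enc_l v). auto.
  - intros i lv y Hev cn Hd. inversion Hev; subst.
    destruct (decode_cases cn) as [[H _]|[[H _]|[(q & -> & H)|[(a & lc & _ & H)|[(a & b & _ & H)|(q & _ & H)]]]]];
      try (rewrite H in Hd; discriminate); rewrite H in Hd.
    injection Hd as Hqi. subst i.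
    match goal with Hl : q < length lv |- _ => destruct (nth_compl lv q Hl) as (l & Cl & Hin) end.
    eexists (_ :: l). split; [|left; reflexivity].
    apply closed_cons; auto.
    exists 0, (6 * q + 2), (enc_l lv), (nth q lv 0). split; [reflexivity|]. left. split; [reflexivity|].
    right; right; left. exists q. auto.
  - intros f gs IHf IHgs lv y Hev cn Hd.
    destruct (decode_cases cn) as [[H _]|[[H _]|[(q & _ & H)|[(a & lc & -> & H)|[(a & b & _ & H)|(q & _ & H)]]]]];
      try (rewrite H in Hd; discriminate); rewrite H in Hd.
    injection Hd as Ha Hlc.
    inversion Hev; subst.
    assert (LL : forall lc lv ws, eval_list (map decode lc) lv ws -> Forall (fun c => forall lv y, eval c lv y -> forall cn, decode cn = c ->
        exists l, closedL l /\ In (jE cn (enc_l lv) y) l) (map decode lc) ->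
        exists l, closedL l /\ In (jL (enc_l lc) (enc_l lv) (enc_l ws)) l).
    { clear. induction lc as [|c0 lc IH]; intros lv ws Hl HF.
      - inversion Hl; subst. eexists [_]. split; [|left; reflexivity].
        apply closed_cons; [apply closed_nil|].
        exists 1, 0, (enc_l lv), 0. split; [reflexivity|]. right; left. split; [reflexivity|].
        left; auto.
      - inversion Hl; subst. inversion HF; subst.
        destruct (H2 lv w H1 c0 eq_refl) as (l1 & C1 & I1).
        destruct (IH lv ws0 H4 H3) as (l2 & C2 & I2).
        eexists (_ :: l1 ++ l2). split; [|left; reflexivity].
        apply closed_cons. apply closed_app; auto.
        exists 1, (enc_l (c0 :: lc)), (enc_l lv), (enc_l (w :: ws0)). split; [reflexivity|].
        right; left. split; [reflexivity|]. right.
        exists c0, (enc_l lc), w, (enc_l ws0). split; [reflexivity|]. split; [reflexivity|].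
        split; apply in_or_app; auto. }
    match goal with H1 : eval_list _ lv ?ws, H4 : eval _ ?ws y |- _ => destruct (LL lc lv ws H1 IHgs) as (l1 & C1 & I1); destruct (IHf ws y H4 a eq_refl) as (l2 & C2 & I2) end.
    eexists (_ :: l1 ++ l2). split; [|left; reflexivity].
    apply closed_cons. apply closed_app; auto.
    exists 0, (6 * to_nat (a, enc_l lc) + 3), (enc_l lv), y. split; [reflexivity|]. left. split; [reflexivity|].
    right; right; right; left. exists a, (enc_l lc), (enc_l ws).
    split; [reflexivity|]. split; apply in_or_app; auto.
  - intros f g IHf IHg lv y Hev cn Hd.
    destruct (decode_cases cn) as [[H _]|[[H _]|[(q & _ & H)|[(a & lc & _ & H)|[(a & b & -> & H)|(q & _ & H)]]]]];
      try (rewrite H in Hd; discriminate); rewrite H in Hd.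
    injection Hd as Ha Hb.
    assert (IN : forall n v y, eval (CPrec f g) (n :: v) y ->
      exists l, closedL l /\ In (jE (6 * to_nat (a, b) + 4) (enc_l (n :: v)) y) l).
    { induction n as [|n IHn]; intros v y0 E; inversion E; subst.
      - destruct (IHf v y0 H4 a eq_refl) as (l1 & C1 & I1).
        eexists (_ :: l1). split; [|left; reflexivity].
        apply closed_cons; auto.
        exists 0, (6 * to_nat (a, b) + 4), (enc_l (0 :: v)), y0. split; [reflexivity|]. left. split; [reflexivity|].
        right; right; right; right; left. exists a, b, (enc_l v). auto.
      - match goal with HH : eval (CPrec _ _) (n :: v) ?z |- _ => destruct (IHn v z HH) as (l1 & C1 & I1) end.
        match goal with HH : eval _ (n :: ?z :: v) y0 |- _ => destruct (IHg (n :: z :: v) y0 HH b eq_refl) as (l2 & C2 & I2) end.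
        eexists (_ :: l1 ++ l2). split; [|left; reflexivity].
        apply closed_cons. apply closed_app; auto.
        exists 0, (6 * to_nat (a, b) + 4), (enc_l (S n :: v)), y0. split; [reflexivity|]. left. split; [reflexivity|].
        right; right; right; right; right; left. exists a, b, n, (enc_l v), z.
        split; [reflexivity|]. split; [reflexivity|]. split; apply in_or_app; auto. }
    inversion Hev; subst; apply IN; auto.
  - intros f IHf lv y Hev cn Hd.
    destruct (decode_cases cn) as [[H _]|[[H _]|[(q & _ & H)|[(a & lc & _ & H)|[(a & b & _ & H)|(q & -> & H)]]]]];
      try (rewrite H in Hd; discriminate); rewrite H in Hd.
    injection Hd as Hq.
    inversion Hev; subst.
    destruct (IHf (y :: lv) 0 H1 q eq_refl) as (l1 & C1 & I1).
    destruct (collect (fun m l => exists k, In (jE q (cons_ m (enc_l lv)) (S k)) l) y) as (l2 & C2 & I2).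
    { intros m l l' [k Hk] Hi. exists k. auto. }
    { intros m Hm. match goal with HH : forall m, m < y -> exists k, _ |- _ => destruct (HH m Hm) as [k Hk] end.
      destruct (IHf (m :: lv) (S k) Hk q eq_refl) as (l & C & I). exists l. split; eauto. }
    eexists (_ :: l1 ++ l2). split; [|left; reflexivity].
    apply closed_cons. apply closed_app; auto.
    exists 0, (6 * q + 5), (enc_l lv), y. split; [reflexivity|]. left. split; [reflexivity|].
    right; right; right; right; right; right. exists q.
    split; [reflexivity|]. split. apply in_or_app; auto.
    intros m Hm. destruct (I2 m Hm) as [k Hk]. exists k. apply in_or_app; auto.
Qed.

Arguments to_nat : simpl never.
Arguments of_nat : simpl never.

Definition P := TPair.
Definition exS x f := FEx x (TV 60) f.
Definition mem t := FMem (TV 60) t.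
Definition jEt c v y := P (TC 0) (P c (P v y)).
Definition jLt c v y := P (TC 1) (P c (P v y)).
Definition jNt c v y := P (TC 2) (P c (P v y)).
Definition const x l := TS (P x l).
Definition six q k := TAdd (TMul (TC 6) q) (TC k).
Definition Va := TV 64.
Definition Vb := TV 65.
Definition Vc := TV 66.

Fixpoint ors (l : list fm) : fm :=
  match l with [] => FEq (TC 0) (TC 1) | [f] => f | f :: l => FOr f (ors l) end.

Definition R0 := exS 67 (FAnd (FEq Va (TMul (TC 6) (TV 67))) (FEq Vc (TC 0))).
Definition R1 := exS 67 (exS 68 (exS 69 (FAnd (FEq Va (six (TV 67) 1))
        (FAnd (FEq Vb (const (TV 68) (TV 69))) (FEq Vc (TS (TV 68))))))).
Definition R2 := exS 67 (FAnd (FEq Va (six (TV 67) 2)) (mem (jNt (TV 67) Vb Vc))).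
Definition R3 := exS 67 (exS 68 (exS 69 (FAnd (FEq Va (six (P (TV 67) (TV 68)) 3))
        (FAnd (mem (jLt (TV 68) Vb (TV 69))) (mem (jEt (TV 67) (TV 69) Vc)))))).
Definition R4 := exS 67 (exS 68 (exS 69 (FAnd (FEq Va (six (P (TV 67) (TV 68)) 4))
        (FAnd (FEq Vb (const (TC 0) (TV 69))) (mem (jEt (TV 67) (TV 69) Vc)))))).
Definition R4' := exS 67 (exS 68 (exS 69 (exS 70 (exS 71 (FAnd (FEq Va (six (P (TV 67) (TV 68)) 4))
        (FAnd (FEq Vb (const (TS (TV 69)) (TV 70)))
        (FAnd (mem (jEt Va (const (TV 69) (TV 70)) (TV 71)))
              (mem (jEt (TV 68) (const (TV 69) (const (TV 71) (TV 70))) Vc))))))))).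
Definition R5 := exS 67 (FAnd (FEq Va (six (TV 67) 5))
        (FAnd (mem (jEt (TV 67) (const Vc Vb) (TC 0)))
              (FAll 72 Vc (exS 73 (mem (jEt (TV 67) (const (TV 72) Vb) (TS (TV 73)))))))).
Definition Erules : fm := ors [R0; R1; R2; R3; R4; R4'; R5].

Definition Lrules : fm :=
  FOr (FAnd (FEq Va (TC 0)) (FEq Vc (TC 0)))
      (exS 67 (exS 68 (exS 69 (exS 70 (FAnd (FEq Va (const (TV 67) (TV 68)))
        (FAnd (FEq Vc (const (TV 69) (TV 70)))
        (FAnd (mem (jEt (TV 67) Vb (TV 69))) (mem (jLt (TV 68) Vb (TV 70)))))))))).

Definition Nrules : fm :=
  FOr (exS 67 (FAnd (FEq Va (TC 0)) (FEq Vb (const Vc (TV 67)))))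
      (exS 67 (exS 68 (exS 69 (FAnd (FEq Va (TS (TV 67)))
        (FAnd (FEq Vb (const (TV 68) (TV 69))) (mem (jNt (TV 67) (TV 69) Vc))))))).

Definition JustF : fm :=
  exS 63 (exS 64 (exS 65 (exS 66 (FAnd (FEq (TV 62) (P (TV 63) (P Va (P Vb Vc))))
    (FOr (FAnd (FEq (TV 63) (TC 0)) Erules)
    (FOr (FAnd (FEq (TV 63) (TC 1)) Lrules)
         (FAnd (FEq (TV 63) (TC 2)) Nrules))))))).

Lemma JustF_sound r : satP r JustF -> JustC (fun x => Nat.testbit (r 60) x = true) (r 62).
Proof.
  intros H. cbn [satP evalt upd Nat.eqb JustF exS mem jEt jLt jNt const six Va Vb Vc P Erules Lrules Nrules ors R0 R1 R2 R3 R4 R4' R5] in H.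
  destruct H as (tag & _ & a & _ & b & _ & c & _ & E & H).
  exists tag, a, b, c. split; [exact E|].
  destruct H as [[T H]|[[T H]|[T H]]].
  - left. split; [exact T|].
    destruct H as [H|[H|[H|[H|[H|[H|H]]]]]].
    + left. destruct H as (q & _ & A & B). eauto.
    + right; left. destruct H as (q & _ & x & _ & l & _ & A & B & C). exists q, x, l. eauto.
    + right; right; left. destruct H as (q & _ & A & B). eauto.
    + right; right; right; left. destruct H as (f & _ & gs & _ & W & _ & A & B & C). exists f, gs, W. eauto.
    + right; right; right; right; left. destruct H as (f & _ & g & _ & V & _ & A & B & C). exists f, g, V. eauto.
    + right; right; right; right; right; left.
      destruct H as (f & _ & g & _ & k & _ & V & _ & z & _ & A & B & C & D). exists f, g, k, V, z. eauto.
    + right; right; right; right; right; right.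
      destruct H as (q & _ & A & B & C). exists q. split; [auto|]. split; [auto|].
      intros m Hm. destruct (C m Hm) as (k & _ & Hk). eauto.
  - right; left. split; [exact T|].
    destruct H as [H|(g & _ & gs & _ & w & _ & ws & _ & A & B & C & D)]; [left; exact H|right].
    exists g, gs, w, ws. eauto.
  - right; right. split; [exact T|].
    destruct H as [(l & _ & A & B)|(i & _ & x & _ & l & _ & A & B & C)]; [left|right]; eauto.
    exists i, x, l. eauto.
Qed.

Lemma memP_lt M x : Nat.testbit M x = true -> x < M.
Proof.
  intros H. destruct M as [|M]. rewrite Nat.bits_0 in H; discriminate.
  destruct (Nat.le_gt_cases x (Nat.log2 (S M))).
  - pose proof (Nat.log2_lt_lin (S M) ltac:(lia)). lia.
  - rewrite Nat.bits_above_log2 in H; auto; discriminate.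
Qed.

Ltac saturate S :=
  unfold cons_, jE, jL, jN in *;
  repeat match goal with
  | H : context [to_nat (?x, ?y)] |- _ =>
      lazymatch goal with
      | _ : x <= to_nat (x, y) /\ y <= to_nat (x, y) |- _ => fail
      | _ => pose proof (to_nat_ge x y)
      end
  | H : Nat.testbit S ?x = true |- _ =>
      lazymatch goal with
      | _ : x < S |- _ => fail
      | _ => pose proof (memP_lt S x H)
      end
  end.

Lemma JustF_complete r :
  Nat.testbit (r 60) (r 62) = true ->
  JustC (fun x => Nat.testbit (r 60) x = true) (r 62) -> satP r JustF.
Proof.
  intros Hj H. cbn [satP evalt upd Nat.eqb JustF exS mem jEt jLt jNt const six Va Vb Vc P Erules Lrules Nrules ors R0 R1 R2 R3 R4 R4' R5].
  set (Sm := r 60) in *. clearbody Sm.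
  destruct H as (tag & a & b & c & E & H).
  rewrite E in Hj.
  assert (B : tag < Sm /\ a < Sm /\ b < Sm /\ c < Sm) by (saturate Sm; lia).
  destruct B as (B1 & B2 & B3 & B4).
  exists tag; split; [auto|]. exists a; split; [auto|]. exists b; split; [auto|]. exists c; split; [auto|].
  split; [exact E|].
  destruct H as [[T H]|[[T H]|[T H]]].
  - left. split; [exact T|].
    destruct H as [H|[H|[H|[H|[H|[H|H]]]]]].
    + left. destruct H as (q & A & C). exists q. split; [saturate Sm; lia|]. auto.
    + right; left. destruct H as (q & x & l & A & C & D).
      exists q; split; [saturate Sm; lia|]. exists x; split; [saturate Sm; lia|].
      exists l; split; [saturate Sm; lia|]. auto.
    + right; right; left. destruct H as (q & A & C). exists q. split; [saturate Sm; lia|]. auto.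
    + right; right; right; left. destruct H as (f & gs & W & A & C & D).
      exists f; split; [saturate Sm; lia|]. exists gs; split; [saturate Sm; lia|].
      exists W; split; [saturate Sm; lia|]. auto.
    + right; right; right; right; left. destruct H as (f & g & V & A & C & D).
      exists f; split; [saturate Sm; lia|]. exists g; split; [saturate Sm; lia|].
      exists V; split; [saturate Sm; lia|]. auto.
    + right; right; right; right; right; left.
      destruct H as (f & g & k & V & z & A & C & D & F).
      exists f; split; [saturate Sm; lia|]. exists g; split; [saturate Sm; lia|].
      exists k; split; [saturate Sm; lia|]. exists V; split; [saturate Sm; lia|].
      exists z; split; [saturate Sm; lia|]. auto.
    + right; right; right; right; right; right.
      destruct H as (q & A & C & D).
      exists q; split; [saturate Sm; lia|]. split; [auto|]. split; [auto|].
      intros m Hm. destruct (D m Hm) as [k Hk]. exists k. split; [saturate Sm; lia|]. exact Hk.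
  - right; left. split; [exact T|].
    destruct H as [H|(g & gs & w & ws & A & C & D & F)]; [left; exact H|right].
    exists g; split; [saturate Sm; lia|]. exists gs; split; [saturate Sm; lia|].
    exists w; split; [saturate Sm; lia|]. exists ws; split; [saturate Sm; lia|]. auto.
  - right; right. split; [exact T|].
    destruct H as [(l & A & C)|(i & x & l & A & C & D)]; [left|right].
    + exists l; split; [saturate Sm; lia|]. auto.
    + exists i; split; [saturate Sm; lia|]. exists x; split; [saturate Sm; lia|].
      exists l; split; [saturate Sm; lia|]. auto.
Qed.

Definition CertF : fm :=
  FAnd (FMem (TV 60) (TV 61)) (FAll 62 (TV 60) (FOr (FNot (FMem (TV 60) (TV 62))) JustF)).

Definition Cert (M J : nat) : Prop :=
  Nat.testbit M J = true /\
  forall j, j < M -> Nat.testbit M j = true -> JustC (fun x => Nat.testbit M x = true) j.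

Lemma CertF_iff r : satP r CertF <-> Cert (r 60) (r 61).
Proof.
  unfold CertF. cbn [satP evalt]. split.
  - intros [H1 H2]. split; auto. intros j Hj Hm.
    destruct (H2 j Hj) as [H|H].
    + cbn [satP evalt upd Nat.eqb] in H. contradiction.
    + apply JustF_sound in H. cbn [upd Nat.eqb] in H. exact H.
  - intros [H1 H2]. split; auto. intros j Hj.
    destruct (Nat.testbit (r 60) j) eqn:E.
    + right. apply JustF_complete; cbn [upd Nat.eqb]; auto.
    + left. cbn [satP evalt upd Nat.eqb]. rewrite E. discriminate.
Qed.

Lemma Cert_sound M c V y : Cert M (jE c V y) -> forall lv, V = enc_l lv -> eval (decode c) lv y.
Proof.
  intros [H1 H2]. 
  pose proof (soundness (fun x => Nat.testbit M x = true)) as S.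
  assert (Hcl : forall j, Nat.testbit M j = true -> JustC (fun x => Nat.testbit M x = true) j).
  { intros j Hj. apply H2; auto. apply memP_lt; auto. }
  exact (S Hcl c V 0 y H1).
Qed.

Fixpoint mask (l : list nat) : nat :=
  match l with [] => 0 | j :: l => Nat.lor (2 ^ j) (mask l) end.

Lemma mask_spec l x : Nat.testbit (mask l) x = true <-> In x l.
Proof.
  induction l; simpl. rewrite Nat.bits_0. split; [discriminate|tauto].
  rewrite Nat.lor_spec, Nat.pow2_bits_eqb, orb_true_iff, IHl, Nat.eqb_eq. intuition.
Qed.

Lemma Cert_complete c lv y : eval (decode c) lv y -> exists M, Cert M (jE c (enc_l lv) y).
Proof.
  intros H. destruct (completeness _ _ _ H c eq_refl) as (l & Cl & Hin).
  exists (mask l). split. apply mask_spec; auto.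
  intros j _ Hj. apply mask_spec in Hj. eapply JustC_mono; [|apply Cl, Hj].
  intros x Hx. apply mask_spec; auto.
Qed.

Arguments to_nat : simpl never.
Arguments of_nat : simpl never.

Definition CertT s j := FLet 60 s (FLet 61 j CertF).
Definition lst1 x := const x (TC 0).

Definition LENF : fm :=
  FAnd (FLt (TV 0) (TPow (TC 2) (TV 5)))
  (FAnd (FLt (TC 0) (TV 5))
   (FOr (FEq (TV 5) (TC 1))
        (FEx 12 (TV 5) (FAnd (FEq (TS (TV 12)) (TV 5)) (FNot (FLt (TV 0) (TPow (TC 2) (TV 12)))))))).

Definition Theta (ef eL : nat) : fm :=
  FEx 3 (TV 2) (FEx 4 (TV 2) (FEx 5 (TV 2) (FAnd LENF
  (FAnd (CertT (TV 4) (jEt (TC ef) (lst1 (TV 5)) (TV 3)))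
  (FEx 6 (TPow (TC 2) (TV 3)) (FEx 7 (TV 2)
  (FAnd (CertT (TV 7) (jEt (TC eL) (lst1 (TV 6)) (TC 1)))
  (FAll 8 (TV 1) (FAll 9 (TV 1) (FAll 10 (TV 1)
   (FAnd (FOr (FNot (CertT (TV 10) (jEt (TV 6) (lst1 (TV 8)) (TV 9))))
              (FEx 11 (TV 2) (CertT (TV 11) (jEt (TV 0) (lst1 (TV 8)) (TV 9)))))
         (FOr (FNot (CertT (TV 10) (jEt (TV 0) (lst1 (TV 8)) (TV 9))))
              (FEx 11 (TV 2) (CertT (TV 11) (jEt (TV 6) (lst1 (TV 8)) (TV 9)))))))))))))))).

Definition LENP n k := n < 2 ^ k /\ 0 < k /\ (k = 1 \/ exists k', k' < k /\ S k' = k /\ ~ n < 2 ^ k').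

Definition ThetaP (ef eL n s t : nat) : Prop :=
  exists m, m < t /\ exists Sf, Sf < t /\ exists k, k < t /\ LENP n k /\
  Cert Sf (jE ef (enc_l [k]) m) /\
  exists g, g < 2 ^ m /\ exists SL, SL < t /\ Cert SL (jE eL (enc_l [g]) 1) /\
  forall x, x < s -> forall y, y < s -> forall S, S < s ->
   (~ Cert S (jE g (enc_l [x]) y) \/ exists S', S' < t /\ Cert S' (jE n (enc_l [x]) y)) /\
   (~ Cert S (jE n (enc_l [x]) y) \/ exists S', S' < t /\ Cert S' (jE g (enc_l [x]) y)).

Lemma Theta_iff ef eL r : satP r (Theta ef eL) <-> ThetaP ef eL (r 0) (r 1) (r 2).
Proof.
  unfold Theta. cbn [satP evalt upd Nat.eqb CertT LENF lst1 jEt const P].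
  setoid_rewrite CertF_iff. cbn [upd Nat.eqb evalt].
  reflexivity.
Qed.

Lemma lt_pow_len g : g < 2 ^ prog_len g.
Proof.
  unfold prog_len. destruct g. simpl; lia. apply Nat.log2_spec; lia.
Qed.

Lemma LENP_iff n k : LENP n k <-> k = prog_len n.
Proof.
  unfold LENP, prog_len. split.
  - intros (A & B & [->|(k' & C & <- & D)]).
    + destruct n as [|[|n]]; simpl in *; auto. lia.
    + f_equal. symmetry. apply Nat.log2_unique. lia. split; lia.
  - intros ->. split; [apply lt_pow_len|]. split; [lia|].
    destruct (Nat.log2 n) eqn:E. left; auto. right. exists (S n0). split; [lia|]. split; auto.
    assert (0 < n). { destruct n as [|[|n]]; simpl in E; try discriminate; lia. }
    pose proof (Nat.log2_spec n H). rewrite E in H0. lia.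
Qed.

Lemma collect_t (Q : nat -> nat -> Prop) N :
  (forall u t t', t <= t' -> Q u t -> Q u t') ->
  (forall u, u < N -> exists t, Q u t) -> exists t, forall u, u < N -> Q u t.
Proof.
  intros Hm. induction N; intros H.
  - exists 0; intros; lia.
  - destruct IHN as [t1 H1]. intros u Hu; apply H; lia.
    destruct (H N ltac:(lia)) as [t2 H2].
    exists (max t1 t2). intros u Hu. destruct (Nat.eq_dec u N) as [->|].
    + eapply Hm; [|exact H2]; lia.
    + eapply Hm; [|apply H1; lia]; lia.
Qed.

Definition Qd (g n : nat) (t x y Z : nat) : Prop :=
   (~ Cert Z (jE g (enc_l [x]) y) \/ exists S', S' < t /\ Cert S' (jE n (enc_l [x]) y)) /\
   (~ Cert Z (jE n (enc_l [x]) y) \/ exists S', S' < t /\ Cert S' (jE g (enc_l [x]) y)).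

Lemma Qd_mono g n t t' x y Z : t <= t' -> Qd g n t x y Z -> Qd g n t' x y Z.
Proof.
  intros Ht [[A|(S' & B & C)] [D|(S'' & E & F)]]; split; eauto;
    right; eexists; split; eauto; lia.
Qed.

Lemma main_equiv (L psi : nat -> Prop) f ef eL n :
  (forall m, eval (decode ef) [m] (f m)) ->
  (forall g, (exists g0, L g0 /\ equiv_prog g0 g) ->
     exists g', L g' /\ equiv_prog g' g /\ prog_len g' <= f (prog_len g)) ->
  functional psi ->
  (forall m, (L m -> eval (decode eL) [m] 1) /\ (~ L m -> eval (decode eL) [m] 0)) ->
  (forall g, L g -> psi g) -> (forall g', psi g' -> exists g, L g /\ equiv_prog g g') ->
  (psi n <-> forall s, exists t, ThetaP ef eL n s t).
Proof.
  intros Hef Hsucc Hfun HL HLpsi Hcap. split.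
  - intros Hpsi s.
    destruct (Hcap n Hpsi) as [g0 [Lg0 Eg0]].
    destruct (Hsucc n (ex_intro _ g0 (conj Lg0 Eg0))) as [g [Lg [Eg Hlen]]].
    destruct (Cert_complete ef [prog_len n] (f (prog_len n)) (Hef _)) as [Sf CSf].
    destruct (Cert_complete eL [g] 1 (proj1 (HL g) Lg)) as [SL CSL].
    assert (B1 : forall x y Z, exists t, Qd g n t x y Z).
    { intros x y Z.
      assert (A1 : exists t, ~ Cert Z (jE g (enc_l [x]) y) \/ exists S', S' < t /\ Cert S' (jE n (enc_l [x]) y)).
      { destruct (classic (Cert Z (jE g (enc_l [x]) y))) as [C|C].
        - apply Cert_sound with (lv := [x]) in C; auto.
          apply (Eg x y) in C. destruct (Cert_complete _ _ _ C) as [S' C'].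
          exists (S S'). right. exists S'. auto.
        - exists 0. left. auto. }
      assert (A2 : exists t, ~ Cert Z (jE n (enc_l [x]) y) \/ exists S', S' < t /\ Cert S' (jE g (enc_l [x]) y)).
      { destruct (classic (Cert Z (jE n (enc_l [x]) y))) as [C|C].
        - apply Cert_sound with (lv := [x]) in C; auto.
          apply (Eg x y) in C. destruct (Cert_complete _ _ _ C) as [S' C'].
          exists (S S'). right. exists S'. auto.
        - exists 0. left. auto. }
      destruct A1 as [t1 A1]. destruct A2 as [t2 A2].
      exists (max t1 t2). split.
      - destruct A1 as [A1|(S' & X & Y)]; [left; auto|right; exists S'; split; auto; lia].
      - destruct A2 as [A2|(S' & X & Y)]; [left; auto|right; exists S'; split; auto; lia]. }
    assert (B2 : forall x y, exists t, forall Z, Z < s -> Qd g n t x y Z).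
    { intros x y. apply (collect_t (fun Z t => Qd g n t x y Z)).
      intros; eapply Qd_mono; eauto. intros; apply B1. }
    assert (B3 : forall x, exists t, forall y, y < s -> forall Z, Z < s -> Qd g n t x y Z).
    { intros x. apply (collect_t (fun y t => forall Z, Z < s -> Qd g n t x y Z)).
      intros; eapply Qd_mono; eauto. intros; apply B2. }
    destruct (collect_t (fun x t => forall y, y < s -> forall Z, Z < s -> Qd g n t x y Z) s)
      as [t0 B4].
    { intros; eapply Qd_mono; eauto. }
    { intros; apply B3. }
    set (m := f (prog_len n)) in *.
    set (k := prog_len n) in *.
    exists (S (m + Sf + k + SL + t0)).
    exists m. split; [lia|]. exists Sf. split; [lia|]. exists k. split; [lia|].
    split. apply LENP_iff; reflexivity.
    split; [exact CSf|].
    exists g. split.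
    { pose proof (lt_pow_len g). pose proof (Nat.pow_le_mono_r 2 _ _ ltac:(lia) Hlen). lia. }
    exists SL. split; [lia|]. split; [exact CSL|].
    intros x Hx y Hy Z HZ. eapply Qd_mono; [|apply B4; auto]. lia.
  - intros H.
    set (M := f (prog_len n)).
    set (G := fun g s => exists t, (exists SL, SL < t /\ Cert SL (jE eL (enc_l [g]) 1)) /\
                forall x, x < s -> forall y, y < s -> forall Z, Z < s -> Qd g n t x y Z).
    assert (HG : forall s, exists g, g < 2 ^ M /\ G g s).
    { intros s. destruct (H s) as [t (m & _ & Sf & _ & k & _ & Hk & CSf & g & Hg & SL & HSL & CSL & Hall)].
      apply LENP_iff in Hk. subst k.
      apply Cert_sound with (lv := [prog_len n]) in CSf; auto.
      pose proof (eval_det _ _ _ _ CSf (Hef (prog_len n))). subst m.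
      exists g. split; [exact Hg|]. exists t. split; eauto. }
    assert (Hanti : forall g s s', s <= s' -> G g s' -> G g s).
    { intros g s s' Hs (t & A & B). exists t. split; auto. intros x Hx y Hy Z HZ. apply B; lia. }
    assert (HP : exists g, g < 2 ^ M /\ forall s, G g s).
    { apply NNPP. intros Hn.
      destruct (collect_t (fun g s => ~ G g s) (2 ^ M)) as [s0 Hs0].
      - intros g s s' Hs A B. apply A. eapply Hanti; eauto.
      - intros g Hg. apply not_all_ex_not. intros Hc. apply Hn. eauto.
      - destruct (HG s0) as [g [Hg Gg]]. apply (Hs0 g Hg Gg). }
    destruct HP as [g [_ Hg]].
    assert (Lg : L g).
    { destruct (Hg 0) as (t & (SL & _ & CSL) & _).
      apply Cert_sound with (lv := [g]) in CSL; auto.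
      apply NNPP. intros Hn. pose proof (eval_det _ _ _ _ CSL (proj2 (HL g) Hn)). discriminate. }
    assert (Eg : equiv_prog g n).
    { intros x y. unfold phi. split; intros Hp.
      - destruct (Cert_complete _ _ _ Hp) as [S0 C0].
        destruct (Hg (S (x + y + S0))) as (t & _ & B).
        destruct (B x ltac:(lia) y ltac:(lia) S0 ltac:(lia)) as [[A|(S' & _ & C)] _].
        + contradiction.
        + eapply Cert_sound; eauto.
      - destruct (Cert_complete _ _ _ Hp) as [S0 C0].
        destruct (Hg (S (x + y + S0))) as (t & _ & B).
        destruct (B x ltac:(lia) y ltac:(lia) S0 ltac:(lia)) as [_ [A|(S' & _ & C)]].
        + contradiction.
        + eapply Cert_sound; eauto. }
    apply (Hfun g n Eg). apply HLpsi. exact Lg.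
Qed.

Lemma evl_app l1 l2 v w1 w2 : eval_list l1 v w1 -> eval_list l2 v w2 -> eval_list (l1 ++ l2) v (w1 ++ w2).
Proof. intros A; induction A; simpl; auto. intros B. constructor; auto. Qed.

Lemma evl_zeros k v : eval_list (repeat CZero k) v (repeat 0 k).
Proof. induction k; simpl; constructor; auto. constructor. Qed.

Theorem mainTheorem10 (L psi : nat -> Prop) :
  computably_succinct L -> functional psi -> captures L psi -> Pi02 psi.
Proof.
  intros [f [[ef Hef] Hsucc]] Hfun [[eL HL] [HLpsi Hcap]].
  exists (fun n x y => satb (rho ([n; x; y] ++ repeat 0 71)) (Theta ef eL) = true).
  split.
  - exists (enc_c (CComp (cf 74 (Theta ef eL)) ([CProj 0; CProj 1; CProj 2] ++ repeat CZero 71))).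
    intros n x y. rewrite decode_enc_c.
    assert (E : eval (CComp (cf 74 (Theta ef eL)) ([CProj 0; CProj 1; CProj 2] ++ repeat CZero 71))
                  [n; x; y] (b2n (satb (rho ([n; x; y] ++ repeat 0 71)) (Theta ef eL)))).
    { econstructor.
      - apply evl_app; [|apply evl_zeros].
        repeat constructor; simpl; lia.
      - apply eval_cf. rewrite length_app, repeat_length. reflexivity. reflexivity. }
    split; intros H.
    + rewrite H in E. exact E.
    + destruct (satb _ _) eqn:Eb; [contradiction|exact E].
  - intros n.
    rewrite (main_equiv L psi f ef eL n Hef Hsucc Hfun HL HLpsi Hcap).
    split; intros H s; destruct (H s) as [t Ht]; exists t.
    + apply satb_P, Theta_iff. exact Ht.
    + apply satb_P, Theta_iff in Ht. exact Ht.
Qed.
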